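(* Let $M$ be a bounded pointed metric space and let $X\subset \mathrm{Lip}_0(M)=\mathcal F(M)^*$ be an isometric predual of $\mathcal F(M)$ (i.e. $X^*=\mathcal F(M)$ isometrically via the natural duality). Then the following are equivalent: (i) there is a compact Hausdorff topology $\tau$ on $M$ such that $X\subset \mathrm{Lip}_0(M)\cap\mathcal C_\tau(M)$; (ii) $\delta(M)$ is $\sigma(\mathcal F(M),X)$-closed.
   Context: A pointed metric space $M$ has a distinguished origin $0$. $\mathrm{Lip}_0(M)$ is the Banach space of real Lipschitz functions on $M$ vanishing at $0$ with the best Lipschitz constant as norm; $\delta(x)$ is evaluation at $x$, and the Lipschitz free space $\mathcal F(M)$ is the closed linear span of $\delta(M)$ in $\mathrm{Lip}_0(M)^*$, with $\mathcal F(M)^*=\mathrm{Lip}_0(M)$. $\mathcal C_\tau(M)$ denotes the real functions on $M$ continuous for the topology $\tau$. $\sigma(\mathcal F(M),X)$ is the topology of pointwise convergence on elements of $X$. *)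

(* Defs.v *)
From HB Require Import structures.
From mathcomp Require Import all_boot all_order all_algebra.
From mathcomp Require Import all_classical all_reals topology normedtype.
Set Implicit Arguments. Unset Strict Implicit. Unset Printing Implicit Defensive.
Import Order.TTheory GRing.Theory Num.Theory.
Import numFieldNormedType.Exports.
Local Open Scope classical_set_scope.
Local Open Scope ring_scope.

Section LipschitzFree.
Variables (R : realType) (M : Type).

Definition is_metric (d : M -> M -> R) : Prop :=
  [/\ (forall x y, 0 <= d x y), (forall x y, d x y = 0 <-> x = y),
      (forall x y, d x y = d y x) & (forall x y z, d x z <= d x y + d y z)].

Definition bounded_metric (d : M -> M -> R) : Prop :=
  exists C : R, forall x y, d x y <= C.

Variables (d : M -> M -> R) (x0 : M).

Definition lipschitz (f : M -> R) : Prop :=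
  exists L : R, forall x y, `|f x - f y| <= L * d x y.

Definition Lip0 (f : M -> R) : Prop := f x0 = 0 /\ lipschitz f.

Definition lipnorm (f : M -> R) : R :=
  sup [set r : R | exists x y, x <> y /\ r = `|f x - f y| / d x y].

Definition dualnorm (S : set (M -> R)) (mu : (M -> R) -> R) : R :=
  sup [set `|mu f| | f in [set f | S f /\ lipnorm f <= 1]].

Definition linear_on (S : set (M -> R)) (mu : (M -> R) -> R) : Prop :=
  forall (a : R) f g, S f -> S g -> mu (fun x => a * f x + g x) = a * mu f + mu g.

Definition bounded_on (S : set (M -> R)) (mu : (M -> R) -> R) : Prop :=
  exists C : R, forall f, S f -> `|mu f| <= C * lipnorm f.

(** F(M): linear functionals on Lip_0(M) lying in the norm-closed linear span
    of the evaluations delta(x) (elements of F(M) are identified when they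
    agree on Lip_0(M)). *)
Definition in_free (mu : (M -> R) -> R) : Prop :=
  linear_on Lip0 mu /\
  forall e : R, 0 < e -> exists s : seq (R * M),
    forall f, Lip0 f -> lipnorm f <= 1 ->
      `|mu f - \sum_(p <- s) p.1 * f p.2| <= e.

(** X is an isometric predual of F(M): a norm-closed linear subspace of
    Lip_0(M) such that restriction mu |-> mu|_X is an isometry of F(M)
    onto X^*. *)
Definition isometric_predual (X : set (M -> R)) : Prop :=
  [/\ X `<=` Lip0, X (fun _ => 0)
      /\ (forall (a : R) f g, X f -> X g -> X (fun x => a * f x + g x)),
      (forall f, Lip0 f ->
         (forall e : R, 0 < e -> exists g, X g /\ lipnorm (fun x => f x - g x) <= e) ->
         X f),
      (forall mu, in_free mu -> dualnorm X mu = dualnorm Lip0 mu) &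
      (forall psi, linear_on X psi -> bounded_on X psi ->
         exists mu, in_free mu /\ forall f, X f -> mu f = psi f)].

(** delta(M) is sigma(F(M), X)-closed in F(M). *)
Definition delta_weak_closed (X : set (M -> R)) : Prop :=
  forall mu, in_free mu ->
    (forall (n : nat) (fs : 'I_n -> M -> R), (forall i, X (fs i)) ->
       forall e : R, 0 < e -> exists x : M, forall i, `|mu (fs i) - fs i x| < e) ->
    exists x : M, forall f, Lip0 f -> mu f = f x.

End LipschitzFree.

Section Topologies.
Variables (R : realType) (M : Type).

Definition is_topology (tau : set (set M)) : Prop :=
  [/\ tau setT, tau set0,
      (forall A B, tau A -> tau B -> tau (A `&` B)) &
      (forall G : set (set M), G `<=` tau -> tau (\bigcup_(A in G) A))].

Definition top_compact (tau : set (set M)) : Prop :=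
  forall G : set (set M), G `<=` tau -> setT `<=` \bigcup_(A in G) A ->
    exists F : set (set M), [/\ finite_set F, F `<=` G & setT `<=` \bigcup_(A in F) A].

Definition top_hausdorff (tau : set (set M)) : Prop :=
  forall x y : M, x <> y -> exists A B, [/\ tau A, tau B, A x, B y & A `&` B = set0].

Definition compact_hausdorff_topology (tau : set (set M)) : Prop :=
  [/\ is_topology tau, top_compact tau & top_hausdorff tau].

Definition tau_continuous (tau : set (set M)) (f : M -> R) : Prop :=
  forall U : set R, open U -> tau (f @^-1` U).

End Topologies.

(* Main.v *)
Require Import Defs.
From HB Require Import structures.
From mathcomp Require Import all_boot all_order all_algebra.
From mathcomp Require Import all_classical all_reals topology normedtype.
From mathcomp Require Import ring lra.
Import Order.TTheory GRing.Theory Num.Theory.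
Import numFieldNormedType.Exports.
Local Open Scope classical_set_scope.
Local Open Scope ring_scope.
Set Implicit Arguments. Unset Strict Implicit.


Section Basic.
Variables (R : realType) (M : Type) (d : M -> M -> R) (x0 : M).
Hypothesis hd : is_metric d.
Variable C : R.
Hypothesis hC : forall x y, d x y <= C.

Lemma d_ge0 x y : 0 <= d x y. Proof. by case: hd. Qed.
Lemma d_pos x y : x <> y -> 0 < d x y.
Proof.
move=> xy; case: hd => h0 hE _ _; rewrite lt_def h0 andbT.
by apply/eqP => /hE.
Qed.
Lemma d_xx x : d x x = 0. Proof. by case: hd => _ hE _ _; apply/hE. Qed.
Lemma C_ge0 : 0 <= C. Proof. exact: le_trans (d_ge0 x0 x0) (hC x0 x0). Qed.

Lemma lipnorm_ge0 (f : M -> R) : Defs.lipschitz d f -> 0 <= lipnorm d f.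
Proof.
move=> [L hL]; rewrite /lipnorm.
set S := [set r | _].
have [[r Sr]|S0] := pselect (S !=set0).
  have hS : has_ubound S.
    exists L => _ [x [y [xy ->]]].
    by rewrite ler_pdivrMr ?d_pos.
  apply: le_trans (ub_le_sup hS Sr).
  by case: Sr => x [y [xy ->]]; rewrite divr_ge0 ?d_ge0.
suff -> : S = set0 by rewrite sup0.
by apply/seteqP; split => // r Sr; apply: S0; exists r.
Qed.

Lemma lip_bound (f : M -> R) : Defs.lipschitz d f -> forall x y, `|f x - f y| <= lipnorm d f * d x y.
Proof.
move=> hf x y; have [<-|xy] := pselect (x = y).
  by rewrite subrr normr0 mulr_ge0 ?lipnorm_ge0 ?d_ge0.
have [L hL] := hf.
have hS : has_ubound [set r | exists x y, x <> y /\ r = `|f x - f y| / d x y].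
  exists L => _ [x' [y' [xy' ->]]].
  by rewrite ler_pdivrMr ?d_pos.
rewrite -ler_pdivrMr ?d_pos //.
by apply: (ub_le_sup hS); exists x, y.
Qed.

Lemma lipnorm_le (f : M -> R) k : 0 <= k -> (forall x y, `|f x - f y| <= k * d x y) ->
  lipnorm d f <= k.
Proof.
move=> k0 hk; rewrite /lipnorm.
set S := [set r | _].
have [S1|S0] := pselect (S !=set0).
  apply: ge_sup => // _ [x [y [xy ->]]].
  by rewrite ler_pdivrMr ?d_pos.
suff -> : S = set0 by rewrite sup0.
by apply/seteqP; split => // r Sr; apply: S0; exists r.
Qed.

Lemma Lip0_bound (f : M -> R) : Lip0 d x0 f -> forall y, `|f y| <= lipnorm d f * C.
Proof.
move=> [f0 hf] y.
have := lip_bound hf y x0; rewrite f0 subr0 => /le_trans; apply.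
by rewrite ler_wpM2l ?lipnorm_ge0.
Qed.

Lemma Lip0_1_bound (f : M -> R) : Lip0 d x0 f -> lipnorm d f <= 1 -> forall y, `|f y| <= C.
Proof.
move=> hf h1 y; apply: le_trans (Lip0_bound hf y) _.
by rewrite -[leRHS]mul1r ler_wpM2r ?C_ge0.
Qed.

Lemma Lip0_zero : Lip0 d x0 (fun _ => 0).
Proof. by split => //; exists 0 => x y; rewrite subrr normr0 mul0r. Qed.

Lemma lin0 (mu : (M -> R) -> R) : linear_on (Lip0 d x0) mu -> mu (fun _ => 0) = 0.
Proof.
move=> hl; have := hl 1 _ _ Lip0_zero Lip0_zero.
rewrite (_ : (fun _ => 1 * 0 + 0) = (fun _ => 0)); last first.
  by apply: funext => x; rewrite mulr0 addr0.
by rewrite mul1r => h; apply: (addrI (mu (fun _ => 0))); rewrite addr0 -h.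
Qed.

Lemma free_bounded (mu : (M -> R) -> R) : in_free d x0 mu ->
  exists B, forall f, Lip0 d x0 f -> lipnorm d f <= 1 -> `|mu f| <= B.
Proof.
move=> [_ ha]; have [s hs] := ha 1 ltr01.
exists (1 + \sum_(p <- s) `|p.1| * C) => f hf h1.
have := hs f hf h1 => h.
rewrite -(subrK (\sum_(p <- s) p.1 * f p.2) (mu f)).
apply: le_trans (ler_normD _ _) _.
apply: lerD => //.
apply: le_trans (ler_norm_sum _ _ _) _.
apply: ler_sum => p _; rewrite normrM ler_wpM2l //.
exact: Lip0_1_bound.
Qed.

Lemma in_free0 : in_free d x0 (fun _ => 0).
Proof.
split; first by move=> a f g _ _; rewrite mulr0 addr0.
by move=> e e0; exists [::] => f _ _; rewrite big_nil subr0 normr0 ltW.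
Qed.

Lemma in_free_add (mu : (M -> R) -> R) c x : in_free d x0 mu -> in_free d x0 (fun f => mu f + c * f x).
Proof.
move=> [hl ha]; split.
  move=> a f g hf hg /=; rewrite hl //; ring.
move=> e e0; have [s hs] := ha e e0; exists ((c, x) :: s) => f hf h1.
rewrite big_cons /=.
by rewrite (_ : _ - _ = mu f - \sum_(p <- s) p.1 * f p.2) ?hs //; ring.
Qed.

End Basic.

Section Pred.
Variables (R : realType) (M : Type) (d : M -> M -> R) (x0 : M).
Hypothesis hd : is_metric d.
Variable C : R.
Hypothesis hC : forall x y, d x y <= C.
Variable X : set (M -> R).
Hypothesis hX : isometric_predual d x0 X.

Lemma XLip0 f : X f -> Lip0 d x0 f. Proof. by case: hX => + _ _ _ _; apply. Qed.
Lemma X0 : X (fun _ => 0). Proof. by case: hX => _ [] + _ _ _ _. Qed.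

Lemma lipnorm0 : lipnorm d (fun _ : M => (0:R)) <= 1.
Proof.
by apply: (lipnorm_le hd) => // x y; rewrite subrr normr0 mul1r (d_ge0 hd).
Qed.

Lemma separation (mu : (M -> R) -> R) : in_free d x0 mu ->
  (forall f, X f -> mu f = 0) -> forall f, Lip0 d x0 f -> mu f = 0.
Proof.
move=> hmu h0 f hf.
have [hl _] := hmu.
have [B hB] := free_bounded hd hC hmu.
have dX : dualnorm d X mu = 0.
  rewrite /dualnorm (_ : [set _ | _ in _] = [set 0]) ?sup1 //.
  apply/seteqP; split => [_ [g [Xg _] <-]|_ ->] /=; first by rewrite h0 // normr0.
  exists (fun _ => 0); last by rewrite h0 ?normr0 //; exact: X0.
  by split; [exact: X0|exact: lipnorm0].
have dL : dualnorm d (Lip0 d x0) mu = 0.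
  by case: hX => _ _ _ + _ => <-.
have := lipnorm_ge0 hd (proj2 hf); rewrite le_eqVlt => /orP [/eqP L0|Lpos].
  rewrite (_ : f = fun _ => 0) ?(lin0 hl) //.
  apply: funext => y; have := Lip0_bound hd hC hf y.
  by rewrite -L0 mul0r normr_le0 => /eqP.
set L := lipnorm d f in Lpos.
pose g := fun x => L^-1 * f x + 0.
have gb : forall x y, `|g x - g y| <= 1 * d x y.
  move=> x y; rewrite /g !addr0 -mulrBr normrM gtr0_norm ?invr_gt0 //.
  rewrite mulrC ler_pdivrMr // mul1r mulrC.
  by have := lip_bound hd (proj2 hf) x y.
have hg : Lip0 d x0 g.
  split; first by rewrite /g (proj1 hf) mulr0 addr0.
  by exists 1.
have g1 : lipnorm d g <= 1 by apply: (lipnorm_le hd).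
have : `|mu g| <= 0.
  rewrite -dL; apply: ub_le_sup; last by exists g.
  by exists B => _ [h [h1 h2] <-]; apply: hB.
rewrite /g hl //; last exact: Lip0_zero.
rewrite (lin0 hl) addr0 normr_le0 mulf_eq0 invr_eq0 (negbTE (lt0r_neq0 Lpos)) /= => /eqP //.
Qed.

End Pred.

Section Dir1.
Variables (R : realType) (M : Type) (d : M -> M -> R) (x0 : M).
Hypothesis hd : is_metric d.
Variable C : R.
Hypothesis hC : forall x y, d x y <= C.
Variable X : set (M -> R).
Hypothesis hX : isometric_predual d x0 X.

Lemma ball_R (a b e : R) : ball a e b = (`|a - b| < e).
Proof. by []. Qed.

Lemma dir1 (tau : set (set M)) : compact_hausdorff_topology tau ->
  (forall f, X f -> tau_continuous tau f) -> delta_weak_closed d x0 X.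
Proof.
move=> [_ hcomp _] hcont mu hmu hcl.
apply: contrapT => NE.
have sep : forall x, exists f, X f /\ mu f <> f x.
  move=> x; apply: contrapT => hn; apply: NE; exists x => f hf.
  have h0 : forall g, X g -> mu g + -1 * g x = 0.
    move=> g Xg; apply/eqP; rewrite mulN1r subr_eq0; apply/eqP.
    by apply: contrapT => ng; apply: hn; exists g.
  have := separation hd hC hX (in_free_add (-1) x hmu) h0 hf.
  by move/eqP; rewrite mulN1r subr_eq0 => /eqP.
pose G := [set A : set M | tau A /\ exists f e, X f /\ 0 < e /\
   forall y, A y -> e <= `|mu f - f y|].
have cover : setT `<=` \bigcup_(A in G) A.
  move=> x _; have [f [Xf nf]] := sep x.
  pose e := `|mu f - f x| / 2.
  have e0 : 0 < e by rewrite divr_gt0 // normr_gt0 subr_eq0; apply/eqP.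
  exists (f @^-1` ball (f x) e); last by rewrite /= ball_R subrr normr0.
  split; first exact: hcont Xf _ (ball_open _ _).
  exists f, e; split=> //; split=> // y; rewrite /= ball_R => hy.
  have := ler_distD (f y) (mu f) (f x).
  rewrite (distrC (f x)) -/e in hy *.
  have : `|mu f - f x| = 2 * e by rewrite /e; lra.
  lra.
have [F [finF FG Fcov]] := hcomp G (fun A GA => proj1 GA) cover.
have [s Fs] := (finite_seqP F).1 finF; subst F.
have claim : forall s : seq (set M), (forall A, A \in s -> G A) ->
  exists l : seq (M -> R), exists e, 0 < e /\ (forall f, f \in l -> X f) /\
   forall y, (exists2 A, A \in s & A y) -> exists2 f, f \in l & e <= `|mu f - f y|.
  elim => [|A s' IH] hs.
    by exists [::], 1; split => //; split => // y [A]; rewrite in_nil.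
  have hs' : forall B, B \in s' -> G B.
    by move=> B Bs; apply: hs; rewrite in_cons Bs orbT.
  have [l [e [e0 [lX ly]]]] := IH hs'.
  have [_ [f [eA [Xf [eA0 hA]]]]] := hs A (mem_head A s').
  exists (f :: l), (Num.min e eA); split; first by rewrite lt_min e0 eA0.
  split.
    by move=> g; rewrite in_cons => /orP [/eqP ->|/lX].
  move=> y [B]; rewrite in_cons => /orP [/eqP ->|Bs] By.
    exists f; first exact: mem_head.
    by apply: le_trans (hA y By); rewrite ge_min lexx orbT.
  have [g gl hg] := ly y (ex_intro2 _ _ B Bs By).
  exists g; first by rewrite in_cons gl orbT.
  by apply: le_trans hg; rewrite ge_min lexx.
have [l [e [e0 [lX ly]]]] := claim s (fun A As => FG A As).
have [x hx] := hcl (size l) (fun i => nth (fun _ => 0) l i)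
  (fun i => lX _ (mem_nth _ (ltn_ord i))) e e0.
have [A As Ax] := Fcov x I.
have [f fl ef] := ly x (ex_intro2 _ _ A As Ax).
have := hx (Ordinal (eq_ind_r is_true fl (index_mem f l))).
by rewrite /= nth_index // ltNge ef.
Qed.
End Dir1.


Section Lim.
Variable R : realType.

Lemma nearballR (T : Type) (U : set_system T) (FU : Filter U) (g : T -> R) (p e : R) :
  g @ U --> p -> 0 < e -> U [set t | `|g t - p| < e].
Proof.
move=> hp e0; have h : (g @ U) (ball p e) by apply: hp; exact: nbhsx_ballx.
apply: (@filterS _ U FU _ _ _ h) => t /=. by rewrite distrC.
Qed.

Lemma limboundR (T : Type) (U : set_system T) (PU : ProperFilter U) (g : T -> R) (p K : R) :
  g @ U --> p -> (forall t, `|g t| <= K) -> `|p| <= K.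
Proof.
move=> hp hK; rewrite leNgt; apply/negP => hpK.
have e0 : 0 < `|p| - K by rewrite subr_gt0.
have [t ht] := filter_ex (nearballR _ hp e0).
have := ler_normD (p - g t) (g t); rewrite subrK distrC.
have := hK t; rewrite /= in ht; lra.
Qed.

Lemma ultralimR (T : Type) (U : set_system T) (K : R) (g : T -> R) :
  UltraFilter U -> (forall t, `|g t| <= K) -> exists p : R, g @ U --> p.
Proof.
move=> UU hK.
have PU : ProperFilter U := @ultra_proper _ _ UU.
have hUK : U (g @^-1` `[-K, K]).
  apply: (@filterS _ U _ setT); last exact: filterT.
  by move=> t _; rewrite /= in_itv /= -ler_norml.
have [p [_ clp]] := @segment_compact R (-K) K (g @ U) _ hUK.
exists p => V pV; case: (in_ultra_setVsetC (g @^-1` V) UU) => // hc.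
by have [z [zc zV]] := clp (~` V) V hc pV.
Qed.
End Lim.


Section Dir2.
Variables (R : realType) (M : Type) (d : M -> M -> R) (x0 : M).
Hypothesis hd : is_metric d.
Variable C : R.
Hypothesis hC : forall x y, d x y <= C.
Variable X : set (M -> R).
Hypothesis hX : isometric_predual d x0 X.

Definition nbhdX (s : seq (M -> R)) (e : R) (a : M) :=
  [set y | forall f, f \in s -> `|f y - f a| < e].

Definition tauX := [set A : set M | forall a, A a -> exists s e, 0 < e /\
  (forall f, f \in s -> X f) /\ nbhdX s e a `<=` A].

Lemma tauX_top : is_topology tauX.
Proof.
split.
- by move=> a _; exists [::], 1; split => //; split => // f; rewrite in_nil.
- by move=> a.
- move=> A B hA hB a [Aa Ba].
  have [s1 [e1 [e10 [X1 h1]]]] := hA a Aa.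
  have [s2 [e2 [e20 [X2 h2]]]] := hB a Ba.
  exists (s1 ++ s2), (Num.min e1 e2); split; first by rewrite lt_min e10 e20.
  split; first by move=> f; rewrite mem_cat => /orP [/X1|/X2].
  move=> y hy; split.
    apply: h1 => f fs; apply: lt_le_trans (hy f _) _; first by rewrite mem_cat fs.
    by rewrite ge_min lexx.
  apply: h2 => f fs; apply: lt_le_trans (hy f _) _; first by rewrite mem_cat fs orbT.
  by rewrite ge_min lexx orbT.
- move=> G hG a [A GA Aa].
  have [s [e [e0 [Xs h]]]] := hG A GA a Aa.
  exists s, e; split => //; split => // y hy.
  by exists A => //; apply: h.
Qed.

Lemma tauX_ball f c e : X f -> tauX [set y | `|f y - c| < e].
Proof.
move=> Xf a /= ha.
exists [:: f], (e - `|f a - c|); split; first by rewrite subr_gt0.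
split; first by move=> g; rewrite mem_seq1 => /eqP ->.
move=> y /= hy; have := hy f (mem_head _ _).
have := ler_distD (f a) (f y) c.
lra.
Qed.

Lemma tauX_cont f : X f -> tau_continuous tauX f.
Proof.
move=> Xf U oU a /= Ua.
have : nbhs (f a) U by move: oU; rewrite openE => /(_ _ Ua).
move=> /nbhs_ballP [e e0 he].
exists [:: f], e; split => //.
split; first by move=> g; rewrite mem_seq1 => /eqP ->.
move=> y /= hy; apply: he; have := hy f (mem_head _ _).
by rewrite /ball /= distrC.
Qed.


Lemma tauX_haus : top_hausdorff tauX.
Proof.
move=> x y xy.
have [f [Xf fxy]] : exists f, X f /\ f x <> f y.
  apply: contrapT => hn.
  pose nu := fun g : M -> R => (0 + 1 * g y) + (-1) * g x.
  have fnu : in_free d x0 nu by apply: in_free_add; apply: in_free_add; exact: in_free0.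
  have h0 : forall g, X g -> nu g = 0.
    move=> g Xg; have gxy : g x = g y by apply: contrapT => ng; apply: hn; exists g.
    by rewrite /nu gxy; ring.
  pose gd := fun z => d z y - d x0 y.
  have hgd : Lip0 d x0 gd.
    split; first by rewrite /gd subrr.
    exists 1 => z w; rewrite /gd mul1r.
    rewrite (_ : d z y - d x0 y - (d w y - d x0 y) = d z y - d w y); last by ring.
    case: hd => _ _ hs ht.
    have := ht z w y; have := ht w z y; rewrite (hs w z).
    rewrite ler_norml; move=> h1 h2; apply/andP; split; lra.
  have := separation hd hC hX fnu h0 hgd.
  rewrite /nu /gd (d_xx hd) => h.
  have : d x y = 0 by lra.
  by case: hd => _ hE _ _ /hE.
pose e := `|f x - f y| / 2.
have e0 : 0 < e by rewrite divr_gt0 // normr_gt0 subr_eq0; apply/eqP.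
exists [set z | `|f z - f x| < e], [set z | `|f z - f y| < e].
split; try exact: tauX_ball; rewrite /= ?subrr ?normr0 //.
apply/seteqP; split => // z [/= hA hB].
have := ler_distD (f z) (f x) (f y).
rewrite (distrC (f x) (f z)).
have : `|f x - f y| = 2 * e by rewrite /e; lra.
lra.
Qed.

Lemma tauX_compact : delta_weak_closed d x0 X -> top_compact tauX.
Proof.
move=> hcl G hG cover.
apply: contrapT => NF.
pose Fl := [set S : set M | exists s : seq (set M), (forall A, A \in s -> G A) /\
  (forall y, (forall A, A \in s -> ~ A y) -> S y)].
have FF : Filter Fl.
  split.
  - by exists [::]; split => // A; rewrite in_nil.
  - move=> P Q [s1 [G1 h1]] [s2 [G2 h2]]; exists (s1 ++ s2); split.
      by move=> A; rewrite mem_cat => /orP [/G1|/G2].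
    move=> y hy; split; [apply: h1 | apply: h2] => A As; apply: hy;
      by rewrite mem_cat As ?orbT.
  - move=> P Q PQ [s [Gs h]]; exists s; split => // y hy; exact/PQ/h.
have PF : ProperFilter Fl.
  apply: Build_ProperFilter_ex => P [s [Gs h]].
  apply: contrapT => nx; apply: NF; exists [set` s]; split => //.
  move=> y _; apply: contrapT => ny; apply: nx; exists y; apply: h => A As Ay.
  by apply: ny; exists A.
have [U [UU FlU]] := ultraFilterLemma PF.
have PU : ProperFilter U := @ultra_proper _ _ UU.
pose psi := fun f : M -> R => lim (f @ U).
have psiP : forall f, X f -> f @ U --> psi f.
  move=> f Xf.
  have [p hp] := ultralimR UU (Lip0_bound hd hC (XLip0 hX Xf)).
  by rewrite /psi (cvg_lim _ hp).
have lin : linear_on X psi.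
  move=> a f g Xf Xg.
  have Xh : X (fun x => a * f x + g x) by case: hX => _ [_ +] _ _ _; apply.
  have hh : (fun x => a * f x + g x) @ U --> a * psi f + psi g.
    apply: cvgD; last exact: psiP.
    by apply: cvgMl_tmp; exact: psiP.
  exact: cvg_lim hh.
have bnd : bounded_on d X psi.
  exists C => f Xf; rewrite mulrC.
  exact: limboundR (psiP f Xf) (Lip0_bound hd hC (XLip0 hX Xf)).
have [mu [hmu hmuX]] : exists mu, in_free d x0 mu /\ forall f, X f -> mu f = psi f.
  by case: hX => _ _ _ _; apply.
have hw : forall n (fs : 'I_n -> M -> R), (forall i, X (fs i)) ->
    forall e, 0 < e -> exists x, forall i, `|mu (fs i) - fs i x| < e.
  move=> n fs Xfs e e0.
  have h : \forall x \near U, forall i, `|mu (fs i) - fs i x| < e.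
    apply: filter_forall => i; rewrite hmuX //.
    apply: filterS (nearballR _ (psiP _ (Xfs i)) e0) => t /=.
    by rewrite distrC.
  have [x hx] := filter_ex h.
  by exists x.
have [xs hxs] := hcl mu hmu hw.
have [A GA Axs] := cover xs I.
have [s [e [e0 [Xs sub]]]] := hG A GA xs Axs.
have UA : U A.
  apply: (@filterS _ U _ (nbhdX s e xs)) => //.
  elim: s Xs {sub} => [|f s IH] Xs.
    by apply: (@filterS _ U _ setT); [move=> y _ f; rewrite in_nil|exact: filterT].
  have Xf : X f by apply: Xs; exact: mem_head.
  have h1 := nearballR (@filter_filter _ U PU) (psiP _ Xf) e0.
  rewrite -(hmuX f Xf) (hxs f (XLip0 hX Xf)) in h1.
  have h2 : U (nbhdX s e xs) by apply: IH => g gs; apply: Xs; rewrite in_cons gs orbT.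
  apply: (@filterS _ U _ _ _ _ (@filterI _ U _ _ _ h1 h2)) => y [hy1 hy2] g.
  by rewrite in_cons => /orP [/eqP ->|/hy2].
have UnA : U (~` A).
  apply: FlU; exists [:: A]; split.
    by move=> B; rewrite mem_seq1 => /eqP ->.
  by move=> y /(_ A (mem_head _ _)).
by have [z [Az nAz]] := filter_ex (filterI UA UnA).
Qed.

End Dir2.

Unset Implicit Arguments.
Theorem proposition3p2 (R : realType) (M : Type) (d : M -> M -> R) (x0 : M)
  (hd : is_metric d) (hb : bounded_metric d) (X : set (M -> R))
  (hX : isometric_predual d x0 X) :
  (exists tau : set (set M),
      compact_hausdorff_topology tau /\ forall f, X f -> tau_continuous tau f)
  <-> delta_weak_closed d x0 X.
Proof.
have [C hC] := hb.
split.
- move=> [tau [htau hcont]]; exact: (dir1 hd hC hX htau hcont).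
- move=> hcl; exists (tauX X); split.
    split; [exact: tauX_top | exact: (tauX_compact hd hC hX hcl) | exact: (tauX_haus hd hC hX)].
  move=> f Xf; exact: tauX_cont.
Qed.
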